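(* Let $k\ge1$ and $n$ be integers. For the graph $G(n,k)$ the following are equivalent: (A) $k-1$ lies in the tail; (B) $n_k$ lies in the tail; (C) $(n-1)_{k+1}$ lies in the tail.
   Context: For an integer $\ell$, $\ell_k$ and $\ell_{k+1}$ denote the least nonnegative residues of $\ell$ modulo $k$ and $k+1$. $G(n,k)$ is the directed graph on vertices $0,1,\dots,k$ whose edges are exactly the $k$ edges $(i+n-2)_{k+1}\to(i+n-1)_k$, $1\le i\le k$; a loop $a\to a$ counts as a cycle. Vertex $k$ has in-degree $0$, vertex $(n-2)_{k+1}$ has out-degree $0$, and all other vertices have in- and out-degree $1$, so $G(n,k)$ is a disjoint union of directed cycles and one directed path, the tail, from $k$ to $(n-2)_{k+1}$ (consisting of the single vertex $k$ if $k=(n-2)_{k+1}$). *)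

(* Defs.v *)
From mathcomp Require Import all_boot all_order all_algebra.
Set Implicit Arguments. Unset Strict Implicit. Unset Printing Implicit Defensive.
Import Order.TTheory GRing.Theory Num.Theory.

Definition resid (l : int) (m : nat) : nat := `|(l %% (m%:Z))%Z|%N.

(* Edge relation of G(n,k) on vertices (naturals 0..k):
   (i+n-2)_{k+1} -> (i+n-1)_k for 1 <= i <= k  (i = j.+1, j : 'I_k). *)
Definition gedge (n : int) (k : nat) : rel nat :=
  fun a b => [exists j : 'I_k,
    (a == resid ((j.+1)%:Z + n - 2)%R k.+1) &&
    (b == resid ((j.+1)%:Z + n - 1)%R k)].

(* v lies in the tail: v lies on the directed path of G(n,k) starting at
   vertex k (in-degree 0), i.e. v is reachable from k by following edges. *)
Definition in_tail (n : int) (k : nat) (v : nat) : Prop :=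
  exists s : seq nat, path (gedge n k) k s /\ last k s = v.

(* Main.v *)
Require Import Defs.
From mathcomp Require Import all_boot all_order all_algebra.
From mathcomp Require Import zify.
From Stdlib Require Import Lia.
Import GRing.Theory Num.Theory.

Lemma residP (l t : int) (m r : nat) : (r < m)%N -> l = (t * m%:Z + r%:Z)%R -> resid l m = r.
Proof.
move=> hr ->; rewrite /resid modzMDl modz_small //.
Qed.

Lemma resid_ex (l : int) (m : nat) : (0 < m)%N ->
  (resid l m < m)%N /\ l = ((l %/ m)%Z * m%:Z + (resid l m)%:Z)%R.
Proof.
move=> hm; have hm0 : (m%:Z != 0)%R by lia.
have h0 := modz_ge0 l hm0.
have h1 : ((l %% m)%Z < m%:Z)%R by apply: ltz_pmod; rewrite ltz_nat.
have e : (Posz (resid l m) = (l %% m)%Z) by rewrite /resid gez0_abs.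
split; first by rewrite -ltz_nat e.
by rewrite e -divz_eq.
Qed.

Lemma resid_nat (t : int) (m x : nat) : (0 < m)%N ->
  resid (t * m%:Z + x%:Z)%R m = x %% m.
Proof.
move=> hm; apply: (@residP _ (t + (x %/ m)%:Z)%R); first by rewrite ltn_mod.
rewrite {1}(divn_eq x m); lia.
Qed.

Section S.
Variables (n : int) (k : nat).
Hypothesis hk : (0 < k)%N.

Definition q : int := ((n - 1) %/ k.+1)%Z.
Definition C := resid (n - 1)%R k.+1.
Definition E := resid (n - 2)%R k.+1.
Definition D := resid (q + 1)%R k.

Lemma C_lt : (C < k.+1)%N.
Proof. by case: (resid_ex (n - 1)%R k.+1 (ltn0Sn k)). Qed.
Lemma nC : (n - 1 = q * k.+1%:Z + C%:Z)%R.
Proof. by case: (resid_ex (n - 1)%R k.+1 (ltn0Sn k)). Qed.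
Lemma D_lt : (D < k)%N.
Proof. by case: (resid_ex (q + 1)%R k hk). Qed.
Lemma qD : (q + 1 = ((q + 1) %/ k)%Z * k%:Z + D%:Z)%R.
Proof. by case: (resid_ex (q + 1)%R k hk). Qed.

Lemma Eval : E = if C == 0 then k else C.-1.
Proof.
have h := nC; have hC := C_lt.
case: eqP => hC0.
  apply: (@residP _ (q - 1)%R) => //. rewrite hC0 in h; lia.
apply: (@residP _ q) => //; first lia.
lia.
Qed.

Lemma Aval (j : nat) : (j < k)%N ->
  resid ((j.+1)%:Z + n - 2)%R k.+1 = if (C + j <= k)%N then C + j else C + j - k.+1.
Proof.
move=> hj; have h := nC; have hC := C_lt.
case: ifP => hCj.
  apply: (@residP _ q); lia.
apply: (@residP _ (q + 1)%R); lia.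
Qed.

Lemma Bval (j : nat) : (j < k)%N ->
  resid ((j.+1)%:Z + n - 1)%R k = (D + C + j) %% k.
Proof.
move=> hj; have h := nC; have h2 := qD.
have -> : ((j.+1)%:Z + n - 1 = (((q + 1) %/ k)%Z + q) * k%:Z + (D + C + j)%:Z)%R by lia.
by rewrite resid_nat.
Qed.


Lemma modk_cases x : (x < 4 * k)%N ->
  [\/ (x < k)%N /\ x %% k = x, (k <= x < 2 * k)%N /\ x %% k = x - k,
     (2 * k <= x < 3 * k)%N /\ x %% k = x - 2 * k
    | (3 * k <= x)%N /\ x %% k = x - 3 * k].
Proof.
move=> hx.
have m t : (t * k <= x < t.+1 * k)%N -> x %% k = x - t * k.
  move=> /andP [h1 h2].
  rewrite -{1}(subnKC h1) modnMDl modn_small //.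
  move: h1 h2; rewrite mulSn; lia.
case: (ltnP x k) => h1; first by constructor 1; rewrite modn_small.
case: (ltnP x (2 * k)) => h2.
  by constructor 2; split; [lia | rewrite (m 1); [lia | lia]].
case: (ltnP x (3 * k)) => h3.
  by constructor 3; split; [lia | rewrite (m 2); [lia | lia]].
by constructor 4; split; [lia | rewrite (m 3); [lia | lia]].
Qed.

Ltac mc x := case: (modk_cases x); first lia; move=> [? ->].
Ltac mcg := match goal with |- context [?x %% k] =>
  lazymatch x with context [_ %% k] => fail | _ => mc x end end.

Definition p v := if v == E then k else if (v < C)%N then (v + D + 1) %% k else (v + D) %% k.
Definition phi v := if v == k then k else (C + D + k + k - 1 - v) %% k.

Lemma p_le v : (p v <= k)%N.
Proof. rewrite /p; case: ifP => // _; case: ifP => _; apply: ltnW; rewrite ltn_mod //. Qed.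

Lemma phi_le v : (phi v <= k)%N.
Proof. rewrite /phi; case: ifP => // _; apply: ltnW; rewrite ltn_mod //. Qed.

Lemma phiK v : (v <= k)%N -> phi (phi v) = v.
Proof.
move=> hv; rewrite /phi; case: (v =P k) => [->|hvk]; first by rewrite eqxx.
have hC := C_lt; have hD := D_lt.
have hm : ((C + D + k + k - 1 - v) %% k < k)%N by rewrite ltn_mod.
rewrite ifN; last by rewrite neq_ltn hm.
do 2 mcg; lia.
Qed.

Lemma phi_km1 : phi k.-1 = resid n k.
Proof.
have h := nC; have h2 := qD.
have -> : n = ((((q + 1) %/ k)%Z + q) * k%:Z + (D + C)%:Z)%R by lia.
rewrite resid_nat // /phi ifN; last lia.
have hC := C_lt; have hD := D_lt.
do 2 mcg; lia.
Qed.

Lemma key v : (v <= k)%N -> p (phi (p v)) = phi v.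
Proof.
move=> hv; have hC := C_lt; have hD := D_lt; have hE := Eval.
have pE : p E = k by rewrite /p eqxx.
have pge u : (C <= u)%N -> u != E -> p u = (u + D) %% k.
  by move=> h1 h2; rewrite /p (negbTE h2) ltnNge h1.
have plt u : (u < C)%N -> u != E -> p u = (u + D + 1) %% k.
  by move=> h1 h2; rewrite /p (negbTE h2) h1.
have phik : phi k = k by rewrite /phi eqxx.
have philt u : (u < k)%N -> phi u = (C + D + k + k - 1 - u) %% k.
  by move=> h; rewrite /phi ifN //; lia.
have modlt x : (x %% k < k)%N by rewrite ltn_mod.
case: (v =P E) => [->|hvE].
  rewrite pE phik; case: (E =P k) => [hEk|hEk]; first by rewrite /p hEk eqxx.
  have hC0 : C != 0 by apply/negP => /eqP h0; apply: hEk; rewrite hE h0.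
  rewrite (pge k) //; last by apply/eqP => h; apply: hEk.
  rewrite hE (negbTE hC0) in hEk *.
  rewrite philt; last lia.
  do 2 mcg; lia.
move/eqP: hvE => hvE.
case: (v =P k) => [hvk|hvk].
  subst v.
  have hC0 : C != 0.
    by apply/negP => /eqP h0; move: hvE; rewrite hE h0 /= eqxx.
  rewrite (pge k) //.
  rewrite philt ?modlt //.
  have -> : (C + D + k + k - 1 - (k + D) %% k) %% k = E.
    rewrite hE (negbTE hC0); do 2 mcg; lia.
  by rewrite phik /p eqxx.
rewrite [phi v]philt; last lia.
case: (ltnP v C) => hvC.
  rewrite (plt v) //.
  have hC0 : C != 0 by lia.
  move: hvE; rewrite hE (negbTE hC0) => hvE.
  rewrite philt ?modlt //.
  have -> : (C + D + k + k - 1 - (v + D + 1) %% k) %% k = C - 2 - v.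
    by do 2 mcg; lia.
  rewrite plt; last 2 first.
  - lia.
  - rewrite hE (negbTE hC0); lia.
  do 2 mcg; lia.
rewrite (pge v) //.
rewrite philt ?modlt //.
have -> : (C + D + k + k - 1 - (v + D) %% k) %% k = C + k - 1 - v.
  by do 2 mcg; lia.
rewrite pge; last 2 first.
- lia.
- rewrite hE; case: ifP => ?; lia.
do 2 mcg; lia.
Qed.

Lemma gedgeP a b : gedge n k a b = [&& (a <= k)%N, a != E & b == p a].
Proof.
have hC := C_lt; have hD := D_lt; have hE := Eval.
have pge u : (C <= u)%N -> u != E -> p u = (u + D) %% k.
  by move=> h1 h2; rewrite /p (negbTE h2) ltnNge h1.
have plt u : (u < C)%N -> u != E -> p u = (u + D + 1) %% k.
  by move=> h1 h2; rewrite /p (negbTE h2) h1.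
apply/idP/idP.
  case/existsP => j /andP [/eqP -> /eqP ->].
  have hj := ltn_ord j.
  rewrite Aval // Bval //.
  case: ifP => h.
    have hA : C + j != E by rewrite hE; case: ifP => ?; lia.
    rewrite hA h /= pge //; last lia.
    apply/eqP; congr (_ %% k); lia.
  have hA : C + j - k.+1 != E by rewrite hE; case: ifP => ?; lia.
  rewrite hA /= plt //; last lia.
  apply/andP; split; first lia.
  apply/eqP; do 2 mcg; lia.
move=> /and3P [ha haE /eqP ->].
apply/existsP.
have hj : ((if (C <= a)%N then a - C else a + k.+1 - C) < k)%N.
  move: haE; rewrite hE; case: ifP => ?; case: ifP => ?; lia.
exists (Ordinal hj); rewrite /= Aval // Bval //.
move: haE; rewrite hE => haE.
case: (leqP C a) => hCa.
  rewrite pge //; last by rewrite hE.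
  have -> : (C + (a - C) <= k)%N by lia.
  apply/andP; split; first by apply/eqP; lia.
  apply/eqP; congr (_ %% k); lia.
rewrite plt //; last by rewrite hE.
have -> : (C + (a + k.+1 - C) <= k)%N = false by lia.
apply/andP; split; first by apply/eqP; lia.
apply/eqP; do 2 mcg; lia.
Qed.

Definition pi (x : 'I_k.+1) : 'I_k.+1 := inord (p x).
Definition phio (x : 'I_k.+1) : 'I_k.+1 := inord (phi x).
Definition kk : 'I_k.+1 := ord_max.

Lemma piE x : val (pi x) = p x.
Proof. by rewrite /pi /= inordK // ltnS p_le. Qed.
Lemma phioE x : val (phio x) = phi x.
Proof. by rewrite /phio /= inordK // ltnS phi_le. Qed.

Lemma pi_inj : injective pi.
Proof.
move=> x y h; have hp : p x = p y by rewrite -!piE h.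
apply: val_inj => /=.
rewrite -(phiK _ (leq_ord x)) -(phiK _ (leq_ord y)); congr phi.
by rewrite -(key _ (leq_ord x)) -(key _ (leq_ord y)) hp.
Qed.

Lemma pi_phio_pi x : pi (phio (pi x)) = phio x.
Proof. by apply: val_inj; rewrite piE !phioE piE key // leq_ord. Qed.

Lemma key_iter j x : iter j pi (phio (iter j pi x)) = phio x.
Proof.
elim: j x => [|j IH] x //=.
by rewrite -iterS iterSr pi_phio_pi IH.
Qed.

Lemma phio_kk : phio kk = kk.
Proof. by apply: val_inj; rewrite phioE /= /phi eqxx. Qed.

Lemma tail_closed x : fconnect pi kk x -> fconnect pi kk (phio x).
Proof.
move=> h; rewrite -(iter_findex h).
rewrite fconnect_sym; last exact: pi_inj.
set j := findex pi kk x.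
have e : iter j pi (phio (iter j pi kk)) = kk by rewrite key_iter phio_kk.
have := fconnect_iter pi j (phio (iter j pi kk)).
by rewrite e.
Qed.

Lemma path_fwd s : forall x, (x <= k)%N -> path (gedge n k) x s ->
  fconnect pi (inord x) (inord (last x s)).
Proof.
elim: s => [|y s IH] x hx /=; first by rewrite connect0.
case/andP => hxy hp; move: (hxy); rewrite gedgeP => /and3P [_ _ /eqP hy].
have hyk : (y <= k)%N by rewrite hy p_le.
apply: connect_trans (IH y hyk hp); apply: connect1; rewrite /frel /=.
apply/eqP; apply: val_inj; rewrite piE /= !inordK ?ltnS //.
Qed.

Lemma path_back t : forall x, fpath pi x t -> all (fun y : 'I_k.+1 => val y != E) (belast x t) ->
  path (gedge n k) (val x) (map val t).
Proof.
elim: t => [|y t IH] x //= /andP [/eqP hxy hp] /andP [hx ha].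
rewrite IH // andbT gedgeP -ltnS ltn_ord hx /= -hxy piE //.
Qed.

Lemma belast_traject (x : 'I_k.+1) j : belast x (traject pi (pi x) j) = traject pi x j.
Proof.
have := lastI x (traject pi (pi x) j).
rewrite -/(traject pi x j.+1) trajectSr last_traject.
by move/rcons_inj => [].
Qed.

Lemma tailP v : (v <= k)%N -> in_tail n k v <-> fconnect pi kk (inord v).
Proof.
move=> hv; split.
  case=> s [hp hl]; have := path_fwd s k (leqnn k) hp.
  by rewrite hl; have -> : (inord k : 'I_k.+1) = kk by apply: val_inj; rewrite /= inordK.
move=> h; set j := findex pi kk (inord v).
have hj : (j < order pi kk)%N by apply: findex_max.
exists (map val (traject pi (pi kk) j)); split.
  apply: (path_back (traject pi (pi kk) j) kk (fpath_traject _ _ _)).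
  rewrite belast_traject; apply/allP => y /trajectP [i hi ->].
  apply/negP => /eqP hE.
  have h1 : iter i.+1 pi kk = kk.
    by apply: val_inj; rewrite /= piE hE /p eqxx.
  have hi1 : (i.+1 < order pi kk)%N by apply: leq_ltn_trans hi hj.
  have := findex_iter hi1.
  by rewrite h1 findex0.
transitivity (val (last kk (traject pi (pi kk) j))); first exact (last_map val (traject pi (pi kk) j) kk).
rewrite last_traject iter_findex //= inordK //.
Qed.

Lemma pC : p C = resid n k.
Proof.
rewrite -phi_km1 /p /phi; have hC := C_lt; have hD := D_lt; have hE := Eval.
rewrite ifN; last by rewrite hE; case: ifP => ?; lia.
rewrite ltnn ifN; last lia.
do 2 mcg; lia.
Qed.

Lemma phioK x : phio (phio x) = x.
Proof. by apply: val_inj; rewrite !phioE phiK // leq_ord. Qed.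

Lemma main :
  (in_tail n k k.-1 <-> in_tail n k (resid n k)) /\
  (in_tail n k (resid n k) <-> in_tail n k (resid (n - 1)%R k.+1)).
Proof.
have hR : (resid n k <= k)%N.
  by case: (resid_ex n k hk) => h _; apply: ltnW.
have hCk : (C <= k)%N by have := C_lt; rewrite ltnS.
rewrite !tailP ?leq_pred // -/C.
have e1 : (inord (resid n k) : 'I_k.+1) = phio (inord k.-1).
  apply: val_inj; rewrite phioE.
  rewrite [LHS]/= inordK; last by rewrite ltnS.
  rewrite inordK ?phi_km1 //.
  by rewrite ltnS leq_pred.
have e2 : (inord (resid n k) : 'I_k.+1) = pi (inord C).
  apply: val_inj; rewrite piE.
  rewrite [LHS]/= inordK; last by rewrite ltnS.
  by rewrite inordK ?pC // ltnS.
split.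
  rewrite e1; split; first exact: tail_closed.
  by move/tail_closed; rewrite phioK.
rewrite e2; split.
  move=> h; apply: connect_trans h _.
  rewrite fconnect_sym; last exact: pi_inj.
  exact: fconnect1.
by move=> h; apply: connect_trans h (fconnect1 _ _).
Qed.

End S.

Theorem lemma4p5 (n : int) (k : nat) (hk : (1 <= k)%N) :
  (in_tail n k k.-1 <-> in_tail n k (resid n k)) /\
  (in_tail n k (resid n k) <-> in_tail n k (resid (n - 1)%R k.+1)).
Proof. exact: main. Qed.
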